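(* Let $\mathrm{S}$ be a semicopula. Suppose that for every measurable space $(X,\mathcal{A})$, every capacity $\mu$ on $\mathcal{A}$, every $\mathcal{A}$-measurable $f\colon X\to[0,1]$ and every $a\in[0,1]$, $$\mathbf{I}_{\mathrm{S}}\big(\mu,\mathrm{S}(a,f)\big)=\mathrm{S}\big(a,\mathbf{I}_{\mathrm{S}}(\mu,f)\big),$$ where $\mathrm{S}(a,f)$ denotes the function $x\mapsto \mathrm{S}(a,f(x))$. Then $\mathrm{S}$ is associative, i.e. $\mathrm{S}(\mathrm{S}(x,y),z)=\mathrm{S}(x,\mathrm{S}(y,z))$ for all $x,y,z\in[0,1]$, and for each $a\in(0,1)$ the function $[0,1]\ni x\mapsto \mathrm{S}(a,x)$ is continuous.
   Context: A semicopula is a function $\mathrm{S}\colon[0,1]^2\to[0,1]$ that is non-decreasing in each coordinate and has neutral element $1$, i.e. $\mathrm{S}(x,1)=\mathrm{S}(1,x)=x$ for all $x\in[0,1]$. For a measurable space $(X,\mathcal{A})$ (with $X$ nonempty and $\mathcal{A}$ a $\sigma$-algebra), a capacity on $\mathcal{A}$ is a non-decreasing set function $\mu\colon\mathcal{A}\to[0,1]$ with $\mu(\emptyset)=0$ and $\mu(X)=1$. For a capacity $\mu$ and an $\mathcal{A}$-measurable $f\colon X\to[0,1]$, the generalized Sugeno integral is $$\mathbf{I}_{\mathrm{S}}(\mu,f)=\sup_{t\in[0,1]}\mathrm{S}\big(t,\mu(\{x\in X: f(x)\ge t\})\big).$$ *)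

(* Defs.v *)
From Stdlib Require Import Reals ClassicalEpsilon.
Open Scope R_scope.

(* Semicopula on [0,1]; S is a total function on R x R, constrained on [0,1]^2. *)
Definition semicopula (S : R -> R -> R) : Prop :=
  (forall x y, 0 <= x <= 1 -> 0 <= y <= 1 -> 0 <= S x y <= 1) /\
  (forall x x' y, 0 <= x <= 1 -> 0 <= x' <= 1 -> 0 <= y <= 1 ->
      x <= x' -> S x y <= S x' y) /\
  (forall x y y', 0 <= x <= 1 -> 0 <= y <= 1 -> 0 <= y' <= 1 ->
      y <= y' -> S x y <= S x y') /\
  (forall x, 0 <= x <= 1 -> S x 1 = x /\ S 1 x = x).

Definition sigma_algebra (X : Type) (A : (X -> Prop) -> Prop) : Prop :=
  A (fun _ => True) /\
  (forall E, A E -> A (fun x => ~ E x)) /\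
  (forall En : nat -> X -> Prop, (forall n, A (En n)) ->
      A (fun x => exists n, En n x)).

Definition Borel (B : R -> Prop) : Prop :=
  forall A : (R -> Prop) -> Prop, sigma_algebra R A ->
    (forall U : R -> Prop,
        (forall x, U x -> exists e, e > 0 /\ forall y, Rabs (y - x) < e -> U y) ->
        A U) ->
    A B.

Definition measurable_fun (X : Type) (A : (X -> Prop) -> Prop) (f : X -> R) : Prop :=
  forall B, Borel B -> A (fun x => B (f x)).

Definition capacity (X : Type) (A : (X -> Prop) -> Prop) (mu : (X -> Prop) -> R) : Prop :=
  mu (fun _ => False) = 0 /\ mu (fun _ => True) = 1 /\
  (forall E F, A E -> A F -> (forall x, E x -> F x) -> mu E <= mu F) /\
  (forall E, A E -> 0 <= mu E <= 1).

Definition Rsup (E : R -> Prop) : R :=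
  epsilon (inhabits 0) (fun m => is_lub E m).

Definition sugeno (S : R -> R -> R) (X : Type) (mu : (X -> Prop) -> R) (f : X -> R) : R :=
  Rsup (fun v => exists t, 0 <= t <= 1 /\ v = S t (mu (fun x => f x >= t))).

(* Main.v *)
Require Import Defs.
From Stdlib Require Import Reals Lra ClassicalEpsilon Classical.
Open Scope R_scope.

Definition SE (S : R -> R -> R) (X : Type) (mu : (X -> Prop) -> R) (f : X -> R) :=
  fun v => exists t, 0 <= t <= 1 /\ v = S t (mu (fun x => f x >= t)).

Lemma sug_lub S X mu f : semicopula S -> (forall E, 0 <= mu E <= 1) ->
  is_lub (SE S X mu f) (sugeno S X mu f).
Proof.
  intros [Hr _] Hmu.
  assert (H : exists m, is_lub (SE S X mu f) m).
  { destruct (completeness (SE S X mu f)) as [m Hm].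
    - exists 1. intros v [t [Ht ->]]. apply Hr; auto.
    - exists (S 0 (mu (fun x => f x >= 0))). exists 0. split; [lra|auto].
    - exists m; exact Hm. }
  unfold sugeno, Rsup. exact (epsilon_spec _ _ H).
Qed.

Lemma sug_le S X mu f c : semicopula S -> (forall E, 0 <= mu E <= 1) ->
  (forall t, 0 <= t <= 1 -> S t (mu (fun x => f x >= t)) <= c) -> sugeno S X mu f <= c.
Proof.
  intros HS Hmu H. destruct (sug_lub S X mu f HS Hmu) as [_ Hl]. apply Hl.
  intros v [t [Ht ->]]. auto.
Qed.

Lemma sug_ge S X mu f t : semicopula S -> (forall E, 0 <= mu E <= 1) -> 0 <= t <= 1 ->
  S t (mu (fun x => f x >= t)) <= sugeno S X mu f.
Proof.
  intros HS Hmu Ht. destruct (sug_lub S X mu f HS Hmu) as [Hu _]. apply Hu.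
  exists t; auto.
Qed.

Lemma S0r S : semicopula S -> forall t, 0 <= t <= 1 -> S t 0 = 0.
Proof.
  intros [Hr [Hm1 [Hm2 Hn]]] t Ht.
  assert (S t 0 <= S 1 0) by (apply Hm1; lra).
  destruct (Hn 0) as [_ H1]; [lra|].
  destruct (Hn 0) as [H2 _]; [lra|].
  assert (0 <= S t 0 <= 1) by (apply Hr; lra). lra.
Qed.

Lemma S0l S : semicopula S -> forall t, 0 <= t <= 1 -> S 0 t = 0.
Proof.
  intros [Hr [Hm1 [Hm2 Hn]]] t Ht.
  assert (S 0 t <= S 0 1) by (apply Hm2; lra).
  destruct (Hn 0) as [H1 _]; [lra|].
  assert (0 <= S 0 t <= 1) by (apply Hr; lra). lra.
Qed.

Definition dec (P : Prop) : bool := if excluded_middle_informative P then true else false.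

Lemma decT (P : Prop) : P -> dec P = true.
Proof. unfold dec; destruct (excluded_middle_informative P); tauto. Qed.
Lemma decF (P : Prop) : ~ P -> dec P = false.
Proof. unfold dec; destruct (excluded_middle_informative P); tauto. Qed.
Lemma decP (P : Prop) : (dec P = true /\ P) \/ (dec P = false /\ ~ P).
Proof. unfold dec; destruct (excluded_middle_informative P); tauto. Qed.

Definition mub (y : R) (F : bool -> Prop) : R :=
  if dec (F true /\ F false) then 1 else if dec (F true) then y else 0.

Lemma mub_range y F : 0 <= y <= 1 -> 0 <= mub y F <= 1.
Proof. intros. unfold mub. destruct dec; [lra|destruct dec; lra]. Qed.

Lemma sug_bool S y f : semicopula S -> 0 <= y <= 1 -> f false = 0 -> 0 <= f true <= 1 ->
  sugeno S bool (mub y) f = S (f true) y.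
Proof.
  intros HS Hy Hf0 Hf1. pose proof HS as [Hr [Hm1 [Hm2 Hn]]].
  assert (Hmu : forall E, 0 <= mub y E <= 1) by (intros; apply mub_range; auto).
  assert (0 <= S (f true) y <= 1) by (apply Hr; auto).
  apply Rle_antisym.
  - apply sug_le; auto. intros t Ht. unfold mub. rewrite Hf0.
    destruct (decP (f true >= t /\ 0 >= t)) as [[-> [_ Hq]]|[-> _]].
    + replace t with 0 by lra. rewrite S0l; auto; lra.
    + destruct (decP (f true >= t)) as [[-> Hq2]|[-> _]].
      * apply Hm1; auto; lra.
      * rewrite S0r; auto; lra.
  - destruct (Req_dec (f true) 0) as [E|E].
    + rewrite E, S0l; auto.
      pose proof (sug_ge S bool (mub y) f 0 HS Hmu ltac:(lra)).
      rewrite S0l in H0; auto.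
    + pose proof (sug_ge S bool (mub y) f (f true) HS Hmu Hf1) as Hg.
      unfold mub in Hg. rewrite Hf0 in Hg.
      rewrite decF in Hg by lra. rewrite decT in Hg by lra. exact Hg.
Qed.

Definition mue (F : R -> Prop) : R := if dec (exists y, F y) then 1 else 0.
Definition mua (F : R -> Prop) : R := if dec (forall y, F y) then 1 else 0.

Lemma sigT X : sigma_algebra X (fun _ => True).
Proof. repeat split. Qed.

Lemma left_lem S a x eps : semicopula S -> 0 <= a <= 1 ->
  (forall (X : Type) (A : (X -> Prop) -> Prop) (mu : (X -> Prop) -> R)
             (f : X -> R) (a : R),
      inhabited X -> sigma_algebra X A -> capacity X A mu ->
      measurable_fun X A f -> (forall x, 0 <= f x <= 1) -> 0 <= a <= 1 ->
      sugeno S X mu (fun x => S a (f x)) = S a (sugeno S X mu f)) ->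
  0 < x <= 1 -> eps > 0 ->
  exists y0, 0 <= y0 < x /\ S a x - eps < S a y0.
Proof.
  intros HS Ha Hcomm Hx He. pose proof HS as [Hr [Hm1 [Hm2 Hn]]].
  apply NNPP; intro Hne.
  assert (Hneg : forall y, 0 <= y < x -> S a y <= S a x - eps).
  { intros y Hy. apply Rnot_lt_le. intro. apply Hne. exists y; split; auto. }
  set (f := fun y => if dec (0 <= y < x) then y else 0).
  assert (Hf : forall y, 0 <= f y <= 1).
  { intro y; unfold f; destruct (decP (0 <= y < x)) as [[-> ?]|[-> ?]]; lra. }
  assert (Hmu : forall E, 0 <= mue E <= 1).
  { intro; unfold mue; destruct dec; lra. }
  assert (Hcap : capacity R (fun _ => True) mue).
  { unfold capacity, mue. split; [|split; [|split]].
    - rewrite decF; auto. intros [? []].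
    - rewrite decT; auto. exists 0; auto.
    - intros E F _ _ HEF. destruct (decP (exists y, E y)) as [[-> [y Hy]]|[-> _]].
      + rewrite decT; [lra|]. exists y; auto.
      + destruct dec; lra.
    - intros; destruct dec; lra. }
  assert (I1 : sugeno S R mue f = x).
  { apply Rle_antisym.
    - apply sug_le; auto. intros t Ht. unfold mue.
      destruct (decP (exists y, f y >= t)) as [[-> [y Hy]]|[-> _]].
      + destruct (Hn t Ht) as [-> _].
        unfold f in Hy; destruct (decP (0 <= y < x)) as [[E ?]|[E ?]]; rewrite E in Hy; lra.
      + rewrite S0r; auto; lra.
    - apply Rnot_lt_le; intro Hlt.
      assert (H0 := sug_ge S R mue f 0 HS Hmu ltac:(lra)). rewrite S0l in H0; auto.
      set (t := (sugeno S R mue f + x) / 2).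
      assert (Ht : 0 <= t <= 1) by (unfold t; lra).
      assert (H1 := sug_ge S R mue f t HS Hmu Ht).
      unfold mue in H1. rewrite decT in H1.
      + destruct (Hn t Ht) as [E _]. rewrite E in H1. unfold t in H1. fold mue in H1. lra.
      + exists t. unfold f. rewrite decT; [lra|]. unfold t; lra. }
  assert (I2 : sugeno S R mue (fun y => S a (f y)) <= S a x - eps).
  { assert (Hc : 0 <= S a x - eps) by (rewrite <- (S0r S HS a Ha); apply Hneg; lra).
    apply sug_le; auto. intros t Ht. unfold mue.
    destruct (decP (exists y, S a (f y) >= t)) as [[-> [y Hy]]|[-> _]].
    + destruct (Hn t Ht) as [-> _].
      unfold f in Hy; destruct (decP (0 <= y < x)) as [[E ?]|[E ?]]; rewrite E in Hy.
      * pose proof (Hneg y H). lra.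
      * rewrite S0r in Hy; auto; lra.
    + rewrite S0r; auto; lra. }
  rewrite (Hcomm R (fun _ => True) mue f a (inhabits 0) (sigT R) Hcap (fun B _ => I) Hf Ha) in I2.
  rewrite I1 in I2. lra.
Qed.

Lemma right_lem S a x eps : semicopula S -> 0 <= a <= 1 ->
  (forall (X : Type) (A : (X -> Prop) -> Prop) (mu : (X -> Prop) -> R)
             (f : X -> R) (a : R),
      inhabited X -> sigma_algebra X A -> capacity X A mu ->
      measurable_fun X A f -> (forall x, 0 <= f x <= 1) -> 0 <= a <= 1 ->
      sugeno S X mu (fun x => S a (f x)) = S a (sugeno S X mu f)) ->
  0 <= x < 1 -> eps > 0 ->
  exists y1, x < y1 <= 1 /\ S a y1 < S a x + eps.
Proof.
  intros HS Ha Hcomm Hx He. pose proof HS as [Hr [Hm1 [Hm2 Hn]]].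
  apply NNPP; intro Hne.
  assert (Hneg : forall y, x < y <= 1 -> S a x + eps <= S a y).
  { intros y Hy. apply Rnot_lt_le. intro. apply Hne. exists y; split; auto. }
  set (f := fun y => if dec (x < y <= 1) then y else 1).
  assert (Hf : forall y, 0 <= f y <= 1).
  { intro y; unfold f; destruct (decP (x < y <= 1)) as [[-> ?]|[-> ?]]; lra. }
  assert (Hmu : forall E, 0 <= mua E <= 1).
  { intro; unfold mua; destruct dec; lra. }
  assert (Hcap : capacity R (fun _ => True) mua).
  { unfold capacity, mua. split; [|split; [|split]].
    - rewrite decF; [reflexivity|]. intros H; exact (H 0).
    - rewrite decT; auto.
    - intros E F _ _ HEF. destruct (decP (forall y, E y)) as [[-> Hy]|[-> _]].
      + rewrite decT; [lra|]. auto.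
      + destruct dec; lra.
    - intros; destruct dec; lra. }
  assert (I1 : sugeno S R mua f = x).
  { apply Rle_antisym.
    - apply sug_le; auto. intros t Ht. unfold mua.
      destruct (decP (forall y, f y >= t)) as [[-> Hy]|[-> _]].
      + destruct (Hn t Ht) as [-> _].
        apply Rnot_lt_le; intro Hlt.
        specialize (Hy ((x + t) / 2)). unfold f in Hy.
        rewrite decT in Hy; lra.
      + rewrite S0r; auto; lra.
    - assert (H1 := sug_ge S R mua f x HS Hmu ltac:(lra)).
      unfold mua in H1 at 1. rewrite decT in H1.
      + destruct (Hn x ltac:(lra)) as [E _]. rewrite E in H1. lra.
      + intro y. unfold f. destruct (decP (x < y <= 1)) as [[-> ?]|[-> ?]]; lra. }
  assert (Hc1 : S a x + eps <= S a 1) by (apply Hneg; lra).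
  assert (Hc0 : 0 <= S a x) by (apply Hr; lra).
  assert (Ha1 : S a 1 <= 1) by (apply Hr; lra).
  assert (I2 : S a x + eps <= sugeno S R mua (fun y => S a (f y))).
  { assert (H1 := sug_ge S R mua (fun y => S a (f y)) (S a x + eps) HS Hmu ltac:(lra)).
    unfold mua in H1 at 1. rewrite decT in H1.
    + destruct (Hn (S a x + eps) ltac:(lra)) as [E _]. rewrite E in H1. exact H1.
    + intro y. unfold f. destruct (decP (x < y <= 1)) as [[-> ?]|[-> ?]].
      * apply Rle_ge, Hneg; auto.
      * lra. }
  rewrite (Hcomm R (fun _ => True) mua f a (inhabits 0) (sigT R) Hcap (fun B _ => I) Hf Ha) in I2.
  rewrite I1 in I2. lra.
Qed.

Theorem theorem1 (S : R -> R -> R) (HS : semicopula S)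
  (Hcomm : forall (X : Type) (A : (X -> Prop) -> Prop) (mu : (X -> Prop) -> R)
             (f : X -> R) (a : R),
      inhabited X -> sigma_algebra X A -> capacity X A mu ->
      measurable_fun X A f -> (forall x, 0 <= f x <= 1) -> 0 <= a <= 1 ->
      sugeno S X mu (fun x => S a (f x)) = S a (sugeno S X mu f)) :
  (forall x y z, 0 <= x <= 1 -> 0 <= y <= 1 -> 0 <= z <= 1 ->
     S (S x y) z = S x (S y z)) /\
  (forall a, 0 < a < 1 -> forall x, 0 <= x <= 1 ->
     limit1_in (S a) (fun y => 0 <= y <= 1) (S a x) x).
Proof.
  pose proof HS as [Hr [Hm1 [Hm2 Hn]]].
  split.
  - intros x y z Hx Hy Hz.
    assert (Hcap : capacity bool (fun _ => True) (mub z)).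
    { unfold capacity, mub. split; [|split; [|split]].
      - rewrite !decF; auto; tauto.
      - rewrite decT; auto.
      - intros E F _ _ HEF.
        destruct (decP (E true /\ E false)) as [[-> [H1 H2]]|[-> _]].
        + rewrite decT; [lra|]. auto.
        + destruct (decP (E true)) as [[-> H1]|[-> _]].
          * destruct dec; [lra|]. rewrite decT; auto; lra.
          * destruct dec; [lra|destruct dec; lra].
      - intros; destruct dec; [lra|destruct dec; lra]. }
    assert (H := Hcomm bool (fun _ => True) (mub z) (fun b => if b then y else 0) x
                   (inhabits true) (sigT bool) Hcap (fun B _ => I)
                   ltac:(intros []; lra) Hx).
    cbv beta in H.
    rewrite (sug_bool S z (fun x0 : bool => S x (if x0 then y else 0)) HS Hz) in H;
      [| simpl; apply S0r; auto | simpl; apply Hr; auto].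
    rewrite (sug_bool S z (fun b : bool => if b then y else 0) HS Hz) in H; [|reflexivity|simpl; auto].
    simpl in H. exact H.
  - intros a Ha x Hx eps He.
    assert (Ha' : 0 <= a <= 1) by lra.
    assert (HL : exists dl, dl > 0 /\ forall y, 0 <= y <= x -> x - y < dl -> S a x - eps < S a y).
    { destruct (Req_dec x 0) as [E|E].
      - exists 1. split; [lra|]. intros y Hy _. replace y with x by lra. lra.
      - destruct (left_lem S a x eps HS Ha' Hcomm ltac:(lra) He) as [y0 [Hy0 H0]].
        exists (x - y0). split; [lra|]. intros y Hy Hd.
        assert (S a y0 <= S a y) by (apply Hm2; lra). lra. }
    assert (HR : exists dr, dr > 0 /\ forall y, x <= y <= 1 -> y - x < dr -> S a y < S a x + eps).
    { destruct (Req_dec x 1) as [E|E].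
      - exists 1. split; [lra|]. intros y Hy _. replace y with x by lra. lra.
      - destruct (right_lem S a x eps HS Ha' Hcomm ltac:(lra) He) as [y1 [Hy1 H1]].
        exists (y1 - x). split; [lra|]. intros y Hy Hd.
        assert (S a y <= S a y1) by (apply Hm2; lra). lra. }
    destruct HL as [dl [Hdl HL]]. destruct HR as [dr [Hdr HR]].
    exists (Rmin dl dr). split; [apply Rmin_glb_lt; auto|].
    intros y [Hy Hd]. simpl in *. unfold Rdist in *.
    pose proof (Rmin_l dl dr). pose proof (Rmin_r dl dr).
    destruct (Rle_dec y x) as [Hyx|Hyx].
    + rewrite Rabs_left1 in Hd by lra.
      assert (S a y <= S a x) by (apply Hm2; lra).
      specialize (HL y ltac:(lra) ltac:(lra)).
      rewrite Rabs_left1 by lra. lra.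
    + rewrite Rabs_right in Hd by lra.
      assert (S a x <= S a y) by (apply Hm2; lra).
      specialize (HR y ltac:(lra) ltac:(lra)).
      rewrite Rabs_right by lra. lra.
Qed.
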